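(* Let $(X,T)$ be a minimal system and let $p_1,\ldots,p_d$ be non-constant integer polynomials. The following are equivalent: (1) there is a dense $G_\delta$ subset $\Omega$ of $X$ such that $\{(T^{p_1(n)}x,\ldots,T^{p_d(n)}x):n\in\mathbb{Z}\}$ is dense in $X^d$ for every $x\in\Omega$; (2) there exists $x\in X$ such that $\{(T^{p_1(n)}x,\ldots,T^{p_d(n)}x):n\in\mathbb{Z}\}$ is dense in $X^d$; (3) for any non-empty open subsets $U,V_1,\ldots,V_d$ of $X$ there is $n\in\mathbb{Z}$ with $U\cap T^{-p_1(n)}V_1\cap\cdots\cap T^{-p_d(n)}V_d\neq\emptyset$.
   Context: A system $(X,T)$ is a compact metric space with a homeomorphism $T$; minimal means every orbit is dense. An integer polynomial is a polynomial with rational coefficients taking integer values on the integers. *)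

(* Defs.v *)
From HB Require Import structures.
From mathcomp Require Import all_boot all_order all_algebra.
From mathcomp Require Import all_classical all_reals all_analysis.
From mathcomp Require Import borel_hierarchy.
Set Implicit Arguments. Unset Strict Implicit. Unset Printing Implicit Defensive.
Import Order.TTheory GRing.Theory Num.Theory.
Local Open Scope ring_scope.
Local Open Scope classical_set_scope.

Definition homeomorphism (X : topologicalType) (T Tinv : X -> X) : Prop :=
  [/\ continuous T, continuous Tinv, cancel T Tinv & cancel Tinv T].

Definition iterz (X : Type) (T Tinv : X -> X) (n : int) : X -> X :=
  match n with
  | Posz k => iter k T
  | Negz k => iter k.+1 Tinv
  end.

Definition orbitZ (X : Type) (T Tinv : X -> X) (x : X) : set X :=
  [set y | exists n : int, y = iterz T Tinv n x].

Definition minimal_system (X : topologicalType) (T Tinv : X -> X) : Prop :=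
  forall x : X, dense (orbitZ T Tinv x).

Definition integer_poly (p : {poly rat}) : Prop :=
  forall n : int, p.[n%:~R] \is a Num.int.

Definition pevalz (p : {poly rat}) (n : int) : int := numq p.[n%:~R].

(* Main.v *)
Require Import Defs.
From HB Require Import structures.
From mathcomp Require Import all_boot all_order all_algebra.
From mathcomp Require Import all_classical all_reals all_analysis.
From mathcomp Require Import borel_hierarchy.
From mathcomp Require Import finmap.
Import Order.TTheory GRing.Theory Num.Theory.
Local Open Scope ring_scope.
Local Open Scope classical_set_scope.
Lemma baire_compact (R : realType) (X : pseudoMetricType R) (G : nat -> set X) :
  compact [set: X] -> (forall k, open (G k) /\ dense (G k)) ->
  dense (\bigcap_k G k).
Proof.
move=> cX hG O O0 oO.
have step : forall (W : set X) (k : nat), exists W' : set X,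
    open W /\ W !=set0 -> [/\ open W', W' !=set0 & closure W' `<=` W `&` G k].
  move=> W k; have [[oW W0]|nW] := pselect (open W /\ W !=set0); last first.
    by exists set0 => h; exfalso; apply: nW.
  have [y [Wy Gy]] := (hG k).2 W W0 oW.
  have : nbhs y (W `&` G k) by apply: open_nbhs_nbhs; split => //; apply: openI => //; exact: (hG k).1.
  move=> /nbhs_ballP[r r0 sub].
  exists (ball y (r / 2))° => _; split.
  - exact: open_interior.
  - by exists y; apply: nbhsx_ballx; rewrite divr_gt0.
  - apply: subset_trans sub.
    apply: subset_trans (@subset_closure_half _ _ y r r0).
    by apply: closureS; exact: interior_subset.
have [f hf] := choice (fun Wk : set X * nat => step Wk.1 Wk.2).
pose S := fix S k := if k is k'.+1 then f (S k', k') else O.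
have hS : forall k, open (S k) /\ S k !=set0.
  elim=> [|k [ok nk]] //=; by have [] := hf (S k, k) (conj ok nk).
have hS2 : forall k, closure (S k.+1) `<=` S k `&` G k.
  by move=> k; have [ok nk] := hS k; have [] := hf (S k, k) (conj ok nk).
have dec : forall i j, (i <= j)%N -> S j `<=` S i.
  move=> i j /subnK <-; elim: (j - i)%N => [|m IH] //= x Sx.
  apply: IH.
  by have [] := hS2 _ x (subset_closure Sx).
have FF : ProperFilter (filter_from [set: nat] S).
  apply: filter_from_proper; last by move=> i _; exact: (hS i).2.
  apply: filter_from_filter; first by exists 0%N.
  move=> i j _ _; exists (maxn i j) => //= x Sx; split; apply: dec Sx.
    exact: leq_maxl.
  exact: leq_maxr.
have [p [_ clp]] := cX _ FF filterT.
have inS : forall k, S k.+1 `<=` S k by move=> k; apply: dec.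
have pcl : forall k, closure (S k) p.
  by move=> k B nB; apply: clp => //; exists k.
exists p; split.
  by have [] := hS2 0%N p (pcl 1%N).
by move=> k _; have [] := hS2 k p (pcl k.+1).
Qed.
Definition box (R : realType) (X : pseudoMetricType R) d (f : 'I_d -> X) (e : R) :=
  [set h : 'I_d -> X | forall i, ball (f i) e (h i)].

Arguments box {R X d}.
Lemma ptws_box (R : realType) (X : pseudoMetricType R) d (f : {ptws 'I_d -> X})
  (O : set {ptws 'I_d -> X}) :
  nbhs f O -> exists2 e : R, 0 < e & box f e `<=` O.
Proof.
pose B := filter_from [set e : R | 0 < e] (box f).
have FB : Filter B.
  apply: filter_from_filter; first by exists 1; rewrite /= ltr01.
  move=> a b a0 b0; exists (Order.min a b); first by rewrite /= lt_min a0 b0.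
  move=> h hb; split=> i.
    by apply: le_ball (hb i); rewrite ge_min lexx.
  by apply: le_ball (hb i); rewrite ge_min lexx orbT.
suff : B --> f by move=> /(_ O) h /h [e e0 he]; exists e.
apply/cvg_sup => i.
apply/cvg_image.
- by rewrite eqEsubset; split=> // y _; exists (dfwith f i y) => //; rewrite dfwithin.
move=> A /nbhs_ballP[e e0 sA].
exists [set h : 'I_d -> X | A (h i) /\ forall j, j != i -> ball (f j) e (h j)].
  exists e => // h hb; split; first exact/sA/hb.
  by move=> j _; apply: hb.
rewrite eqEsubset; split=> [y [h [Ah _] <-] //|y Ay].
exists (dfwith f i y); last by rewrite dfwithin.
split; first by rewrite dfwithin.
by move=> j ji; rewrite dfwithout; [exact: ballxx | rewrite eq_sym].
Qed.

Lemma ptws_open_prod (R : realType) (X : pseudoMetricType R) d (W : 'I_d -> set X) :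
  (forall i, open (W i)) -> open [set h : {ptws 'I_d -> X} | forall i, W i (h i)].
Proof.
move=> oW; rewrite openE => h hW.
have := (@filter_forall _ 'I_d (fun i (g : {ptws 'I_d -> X}) => W i (g i)) (nbhs h) _).
move=> H; apply: H => i.
have hc := @proj_continuous _ (fun _ : 'I_d => X) i h.
have nW : nbhs (h i) (W i) by apply: open_nbhs_nbhs; split; [exact: oW | exact: hW].
exact: (hc _ nW).
Qed.

Section Iter.
Variables (X : topologicalType) (T Tinv : X -> X).

Lemma iter_comm (f g : X -> X) : f \o g = g \o f ->
  forall n m x, iter n f (iter m g x) = iter m g (iter n f x).
Proof.
move=> fg n m.
have h : forall y, iter n f (g y) = g (iter n f y).
  move=> y; elim: n => [|n IHn] //=; rewrite IHn.
  by have := congr1 (fun h => h (iter n f y)) fg.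
elim: m => [|m IH] x //=.
by rewrite h IH.
Qed.

Lemma iter_canc (f g : X -> X) : cancel g f -> forall n x, iter n f (iter n g x) = x.
Proof.
move=> gf; elim=> [|n IH] x //.
by rewrite iterSr iterS gf IH.
Qed.

Hypothesis hT : homeomorphism T Tinv.

Lemma iterz_cont n : continuous (iterz T Tinv n).
Proof.
have [cT cTi _ _] := hT.
have h : forall (f : X -> X), continuous f -> forall k, continuous (iter k f).
  move=> f cf; elim=> [|k IH] /=; first by move=> x; exact: cvg_id.
  move=> x; apply: continuous_comp; [exact: IH | exact: cf].
by case: n => k /=; apply: h.
Qed.

Lemma iterz_comm a b x :
  iterz T Tinv a (iterz T Tinv b x) = iterz T Tinv b (iterz T Tinv a x).
Proof.
have [_ _ c1 c2] := hT.
have TT : T \o T = T \o T by [].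
have TiTi : Tinv \o Tinv = Tinv \o Tinv by [].
have TTi : T \o Tinv = Tinv \o T.
  by apply: funext => y /=; rewrite c1 c2.
have TiT : Tinv \o T = T \o Tinv by rewrite TTi.
by case: a => n; case: b => m; rewrite /iterz; apply: iter_comm; first [done | exact: TTi | exact: TiT].
Qed.

Lemma iterz_surj a y : exists x, iterz T Tinv a x = y.
Proof.
have [_ _ c1 c2] := hT.
case: a => n; rewrite /iterz.
  by exists (iter n Tinv y); apply: (@iter_canc T Tinv c2).
by exists (iter n.+1 T y); apply: (@iter_canc Tinv T c1).
Qed.
End Iter.
Definition pt (R : realType) (X : metricType R) (x : X) : Type := X.
HB.instance Definition _ (R : realType) (X : metricType R) (x : X) :=
  Metric.copy (@pt R X x) X.
HB.instance Definition _ (R : realType) (X : metricType R) (x : X) :=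
  isPointed.Build (@pt R X x) x.
Lemma test (R : realType) (X : metricType R) (x : X) : compact [set: X] -> @cover_compact X [set: X].
Proof.
move=> c.
have : @cover_compact (@pt R X x) [set: @pt R X x].
  by rewrite -compact_cover.
exact.
Qed.
Lemma seq_bigcap (T : topologicalType) (I : eqType) (s : seq I) (A : I -> set T) :
  (forall i, open (A i) /\ dense (A i)) ->
  open (\bigcap_(i in [set i | i \in s]) A i) /\ dense (\bigcap_(i in [set i | i \in s]) A i).
Proof.
move=> hA; elim: s => [|a s IH].
  2: case: IH => o1 d1.
  have -> : \bigcap_(i in [set i | i \in [::]]) A i = setT.
    by apply/seteqP; split=> // x _ i.
  by split; [exact: openT | move=> O [x Ox] _; exists x].
have -> : \bigcap_(i in [set i | i \in a :: s]) A i =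
    A a `&` \bigcap_(i in [set i | i \in s]) A i.
  apply/seteqP; split=> x.
    move=> H; split; first by apply: H; rewrite /= mem_head.
    by move=> i /= Hs; apply: H; rewrite /= in_cons Hs orbT.
  move=> [Ha H] i /=; rewrite in_cons => /orP[/eqP -> //|Hs].
  exact: H.
split; first by apply: openI => //; exact: (hA a).1.
by apply: denseI => //; [exact: (hA a).1 | exact: (hA a).2].
Qed.

Lemma fin_bigcap (T : topologicalType) (I : finType) (A : I -> set T) :
  (forall i, open (A i) /\ dense (A i)) ->
  open (\bigcap_(i in [set: I]) A i) /\ dense (\bigcap_(i in [set: I]) A i).
Proof.
move=> /(@seq_bigcap _ _ (enum I)).
have -> // : [set i | i \in enum I] = [set: I].
by apply/seteqP; split=> // i _; rewrite /= mem_enum.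
Qed.

Lemma open_preimages (X Y : topologicalType) (I : finType) (F : I -> X -> Y)
  (W : I -> set Y) :
  (forall i, continuous (F i)) -> (forall i, open (W i)) ->
  open [set x | forall i, W i (F i x)].
Proof.
move=> cF oW; rewrite openE => x hW.
have := (@filter_forall _ I (fun i y => W i (F i y)) (nbhs x) _).
move=> H; apply: H => i.
have nW : nbhs (F i x) (W i) by apply: open_nbhs_nbhs; split; [exact: oW | exact: hW].
exact: (cF i x _ nW).
Qed.

Theorem mainTheorem3 (R : realType) (X : metricType R) (T Tinv : X -> X)
  (d : nat) (p : 'I_d -> {poly rat}) :
  compact [set: X] -> [set: X] !=set0 ->
  homeomorphism T Tinv -> minimal_system T Tinv ->
  (forall i, integer_poly (p i)) -> (forall i, (1 < size (p i))%N) ->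
  let orb (x : X) : set {ptws 'I_d -> X} :=
    [set f | exists n : int, f = (fun i => iterz T Tinv (pevalz (p i) n) x)] in
  [<-> (exists Omega : set X, [/\ Gdelta Omega, dense Omega &
          forall x, Omega x -> dense (orb x)]);
       (exists x : X, dense (orb x));
       (forall (U : set X) (V : 'I_d -> set X),
          open U -> U !=set0 -> (forall i, open (V i) /\ V i !=set0) ->
          exists n : int,
            U `&` \bigcap_(i in [set: 'I_d])
                    (iterz T Tinv (pevalz (p i) n) @^-1` V i) !=set0)].
Proof.
move=> cX X0 hT hmin _ _ orb.
tfae.
- move=> [Om [_ dOm hOm]].
  have [x [_ Ox]] := dOm setT X0 openT.
  by exists x; apply: hOm.
- move=> [x dx] U V oU U0 hV.
  have [y [Uy [m ym]]] := hmin x U U0 oU.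
  pose W i := iterz T Tinv m @^-1` V i.
  have oW : forall i, open (W i).
    move=> i; apply: open_comp; last exact: (hV i).1.
    by move=> z _; apply: iterz_cont.
  have nW : forall i, exists w, W i w.
    move=> i; have [v Vv] := (hV i).2.
    have [w hw] := @iterz_surj _ T Tinv hT m v.
    by exists w; rewrite /W /= hw.
  have [h hh] := choice nW.
  have [g [Og [n gn]]] := dx [set g : {ptws 'I_d -> X} | forall i, W i (g i)]
     (ex_intro _ (h : {ptws 'I_d -> X}) hh) (@ptws_open_prod _ _ _ W oW).
  exists n; exists y; split => // i _ /=.
  rewrite ym iterz_comm //.
  by have := Og i; rewrite gn.
- move=> H3.
  have [x0 _] := X0.
  pose r (k : nat) : R := k.+1%:R^-1.
  have r0 : forall k, 0 < r k by move=> k; rewrite /r invr_gt0 ltr0n.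
  pose B k (z : X) := (ball z (r k))°.
  have Bc : forall k z, B k z z by move=> k z; exact: nbhsx_ballx.
  have cov : forall k, exists D : {fset X}, [set: X] `<=` cover [set` D] (B k).
    move=> k.
    have cc : @cover_compact (@pt R X x0) [set: @pt R X x0] by rewrite -compact_cover.
    have [D _ hD] : finite_subset_cover [set: X] (B k) [set: X].
      apply: cc; first by move=> z _; exact: open_interior.
      by move=> z _; exists z => //; exact: Bc.
    by exists D.
  have [N hN] := choice cov.
  pose O k (g : 'I_d -> X) := \bigcup_(n in [set: int])
     [set x | forall i, B k (g i) (iterz T Tinv (pevalz (p i) n) x)].
  have oO : forall k g, open (O k g) /\ dense (O k g).
    move=> k g; split.
      apply: bigcup_open => n _.
      apply: (@open_preimages _ _ 'I_d (fun i => iterz T Tinv (pevalz (p i) n)) (fun i => B k (g i))).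
        by move=> i; apply: iterz_cont.
      by move=> i; exact: open_interior.
    move=> U U0 oU.
    have [|n [y [Uy Hy]]] := H3 U (fun i => B k (g i)) oU U0.
      by move=> i; split; [exact: open_interior | exists (g i); exact: Bc].
    by exists y; split => //; exists n => // i; exact: Hy.
  pose G k := \bigcap_(f in [set: {ffun 'I_d -> N k}]) O k (fun i => val (f i)).
  have oG : forall k, open (G k) /\ dense (G k).
    by move=> k; apply: fin_bigcap => f; apply: oO.
  exists (\bigcap_k G k); split.
  - by exists G => // k; exact: (oG k).1.
  - by apply: baire_compact.
  move=> x Ox Oo Oo0 oOo.
  have [f Of] := Oo0.
  have [e e0 hbox] := @ptws_box _ _ _ f Oo (open_nbhs_nbhs (conj oOo Of)).
  have [k hk] := @ltr_add_invr R 0 (e / 2) (divr_gt0 e0 (ltr0Sn _ 1)).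
  rewrite add0r in hk.
  have hc : forall i, exists g : N k, B k (val g) (f i).
    move=> i; have [z Dz Bz] := hN k (f i) Logic.I.
    by exists (FSetSub Dz).
  have [c hc'] := choice hc.
  pose F := [ffun i => c i].
  have [n _ hn] := Ox k Logic.I F Logic.I.
  exists (fun i => iterz T Tinv (pevalz (p i) n) x); split; last by exists n.
  apply: hbox => i.
  have h1 := hn i; rewrite /= ffunE in h1.
  have h2 := hc' i.
  apply: (@le_ball _ _ _ (r k + r k)).
    by rewrite [e]splitr; apply: lerD; apply: ltW.
  apply: (@ball_triangle _ _ (val (c i))).
    by apply: ball_sym; apply: interior_subset.
  by apply: interior_subset.
Qed.
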